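(* Let $f_i$ and $f_j$ be finite set densities on finite subsets of $\mathbb{R}^d$ with cardinality pmfs $p_i,p_j$ and localisation densities $\rho_{i,n},\rho_{j,n}$, let $\omega\in[0,1]$, and let $f_\omega$, $\tilde f_\omega$, $\tilde p_\omega$, $z_\omega(n)$ be as in the context. Let $X=\{x_1,\ldots,x_n\}$ be a finite subset of $\mathbb{R}^d$ with $f_\omega(X)>0$ and $z_\omega(n)>0$. Then $\tilde f_\omega$ is pointwise inconsistent at $X$, i.e. $$\tilde f_\omega(X)<\min\{f_i(X),f_j(X)\},$$ if $$\frac{E_{\tilde p_\omega}\{z_\omega(n)\}}{z_\omega(n)}<\frac{\min\{f_i(X),f_j(X)\}}{f_\omega(X)},$$ where $E_{\tilde p_\omega}\{z_\omega(n)\}=\sum_{n'=0}^\infty\tilde p_\omega(n')z_\omega(n')$; moreover, $\frac{\min\{f_i(X),f_j(X)\}}{f_\omega(X)}\le1$.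
   Context: A finite set density is written $f(\{x_1,\ldots,x_n\})=p(n)\,n!\,\rho_n(x_1,\ldots,x_n)$ with $p$ a pmf on $\{0,1,\ldots\}$ and $\rho_n$ a symmetric probability density on $(\mathbb{R}^d)^n$. For $\omega\in[0,1]$ define $z_\omega(0)=1$, $z_\omega(n)=\int\rho_{i,n}^{1-\omega}\rho_{j,n}^{\omega}\,\mathrm{d}x_1\cdots\mathrm{d}x_n$, $\rho_{\omega,n}=\rho_{i,n}^{1-\omega}\rho_{j,n}^{\omega}/z_\omega(n)$, $N_\omega=\sum_{n'}p_i^{1-\omega}(n')p_j^{\omega}(n')z_\omega(n')$, $p_\omega(n)=p_i^{1-\omega}(n)p_j^{\omega}(n)z_\omega(n)/N_\omega$. The finite set exponential mixture density is $f_\omega(X)=p_\omega(n)\,n!\,\rho_{\omega,n}(x_1,\ldots,x_n)$. Define $\tilde N_\omega=\sum_{n'}p_i^{1-\omega}(n')p_j^{\omega}(n')$, $\tilde p_\omega(n)=p_i^{1-\omega}(n)p_j^{\omega}(n)/\tilde N_\omega$ (the exponential mixture of the cardinality pmfs), and the decoupled fused density $\tilde f_\omega(X)=\tilde p_\omega(n)\,n!\,\rho_{\omega,n}(x_1,\ldots,x_n)$, where $n=|X|$. *)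

(* Defs.v *)
From HB Require Import structures.
From mathcomp Require Import all_boot all_order all_algebra all_fingroup.
From mathcomp Require Import all_classical all_reals all_analysis.
Set Implicit Arguments. Unset Strict Implicit. Unset Printing Implicit Defensive.
Import Order.TTheory GRing.Theory Num.Theory.
Local Open Scope ring_scope.

(* A point of R^d is a d.-tuple R; an ordered n-point configuration
   (x_1,...,x_n) in (R^d)^n is an n.-tuple of such points.  Both carry the
   library's product (tuple) sigma-algebra built on the Borel sets of R. *)
Definition pt (R : realType) (d : nat) := d.-tuple R.
Definition conf (R : realType) (d n : nat) := n.-tuple (d.-tuple R).

Fixpoint tint (R : realType) (T : Type) (intT : (T -> \bar R) -> \bar R)
    (n : nat) : (n.-tuple T -> \bar R) -> \bar R :=
  match n return (n.-tuple T -> \bar R) -> \bar R with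
  | 0 => fun F => F [tuple]
  | n'.+1 => fun F =>
      intT (fun x => @tint R T intT n' (fun t => F [tuple of x :: t]))
  end.

(* Lebesgue integral over R^d (iterated one-dimensional Lebesgue integrals;
   for nonnegative measurable integrands this is the integral w.r.t. the
   d-dimensional Lebesgue measure, by Tonelli). *)
Definition int_Rd (R : realType) (d : nat) (g : d.-tuple R -> \bar R) : \bar R :=
  @tint R R (fun h => (\int[@lebesgue_measure R]_x h x)%E) d g.

Definition int_conf (R : realType) (d n : nat) (F : conf R d n -> \bar R)
  : \bar R := @tint R (d.-tuple R) (@int_Rd R d) n F.

Definition is_pmf (R : realType) (p : nat -> R) : Prop :=
  (forall n, 0 <= p n) /\ (\sum_(n <oo) (p n)%:E)%E = 1%E.

Definition is_loc_densities (R : realType) (d : nat)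
    (rho : forall n, conf R d n -> R) : Prop :=
  forall n,
    measurable_fun [set: conf R d n] (rho n) /\
    (forall x, 0 <= rho n x) /\
    int_conf (fun x => (rho n x)%:E) = 1%E /\
    (forall (x : conf R d n) (s : 'S_n),
        rho n [tuple tnth x (s i) | i < n] = rho n x).

(* finite set density  f({x_1..x_n}) = p(n) n! rho_n(x_1..x_n) *)
Definition fsdens (R : realType) (d : nat) (p : nat -> R)
    (rho : forall n, conf R d n -> R) (n : nat) (x : conf R d n) : R :=
  p n * (n`!)%:R * rho n x.

Section fusion.
Variables (R : realType) (d : nat) (p_i p_j : nat -> R)
  (rho_i rho_j : forall n, conf R d n -> R) (w : R).

Definition z_w (n : nat) : R :=
  if n is 0 then 1 else
  fine (int_conf (fun x => ((@rho_i n x) `^ (1 - w) * (@rho_j n x) `^ w)%:E)).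

Definition rho_w (n : nat) (x : conf R d n) : R :=
  (@rho_i n x) `^ (1 - w) * (@rho_j n x) `^ w / z_w n.

Definition N_w : R :=
  fine (\sum_(n <oo) ((p_i n) `^ (1 - w) * (p_j n) `^ w * z_w n)%:E)%E.

Definition p_w (n : nat) : R :=
  (p_i n) `^ (1 - w) * (p_j n) `^ w * z_w n / N_w.

Definition f_w (n : nat) (x : conf R d n) : R := fsdens p_w (@rho_w) x.

Definition Ntilde_w : R :=
  fine (\sum_(n <oo) ((p_i n) `^ (1 - w) * (p_j n) `^ w)%:E)%E.

Definition ptilde_w (n : nat) : R :=
  (p_i n) `^ (1 - w) * (p_j n) `^ w / Ntilde_w.

Definition ftilde_w (n : nat) (x : conf R d n) : R := fsdens ptilde_w (@rho_w) x.

Definition E_ptilde_z : R :=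
  fine (\sum_(n <oo) (ptilde_w n * z_w n)%:E)%E.

End fusion.

(* Main.v *)
Set Warnings "-all".
Require Import Defs.
From HB Require Import structures.
From mathcomp Require Import all_boot all_order all_algebra all_fingroup.
From mathcomp Require Import all_classical all_reals all_analysis.
From mathcomp Require Import measurable_realfun.
From mathcomp Require Import ring lra.
Import Order.TTheory GRing.Theory Num.Theory.
Local Open Scope ring_scope.
Local Open Scope ereal_scope.

Section good.
Context (R : realType).

Definition good {dT} (T : measurableType dT) (intT : (T -> \bar R) -> \bar R) : Prop :=
  [/\ (forall f : T -> \bar R, (forall x, 0 <= f x) -> 0 <= intT f),
      (forall f g : T -> \bar R, measurable_fun setT f -> measurable_fun setT g ->
         (forall x, 0 <= f x) -> (forall x, f x <= g x) -> intT f <= intT g),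
      (forall f g : T -> \bar R, measurable_fun setT f -> measurable_fun setT g ->
         (forall x, 0 <= f x) -> (forall x, 0 <= g x) ->
         intT (fun x => f x + g x) = intT f + intT g),
      (forall c (f : T -> \bar R), (0 <= c)%R -> measurable_fun setT f -> (forall x, 0 <= f x) ->
         intT (fun x => c%:E * f x) = c%:E * intT f) &
      (forall d' (A : measurableType d') (H : A * T -> \bar R),
         measurable_fun setT H -> (forall z, 0 <= H z) ->
         measurable_fun setT (fun a => intT (fun x => H (a, x))))].

Lemma good_tint dT (T : measurableType dT) intT : @good dT T intT ->
  forall n, @good _ (n.-tuple T) (@tint R T intT n).
Proof.
move=> [i0 imono iD iZ imeas]; elim=> [|n [j0 jmono jD jZ jmeas]].
  split => /=.
  - by move=> f; apply.
  - by move=> f g _ _ _; apply.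
  - by [].
  - by [].
  - move=> d' A H mH H0; apply: (measurableT_comp mH).
    exact: measurable_fun_pair.
have mcons x : measurable_fun [set: n.-tuple T] (fun t => [tuple of x :: t]).
  exact: measurable_cons.
have mcons2 : measurable_fun [set: T * n.-tuple T] (fun p => [tuple of p.1 :: p.2]).
  exact: measurable_cons.
have msec (g : n.+1.-tuple T -> \bar R) : measurable_fun setT g -> forall x,
    measurable_fun [set: n.-tuple T] (fun t => g [tuple of x :: t]).
  by move=> mg x; exact: (measurableT_comp mg (mcons x)).
have mint (g : n.+1.-tuple T -> \bar R) : measurable_fun [set: n.+1.-tuple T] g -> (forall x, 0 <= g x) ->
    measurable_fun [set: T] (fun x => tint intT (fun t => g [tuple of x :: t])).
  move=> mg g0; apply: (jmeas _ T (fun p => g [tuple of p.1 :: p.2])) => //.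
  exact: (measurableT_comp mg mcons2).
split => /=.
- by move=> f f0; apply: i0 => x; apply: j0.
- move=> f g mf mg f0 fg; apply: imono.
  + apply: mint => // x; exact: le_trans (fg x).
  + by apply: mint => // x; exact: le_trans (fg x).
  + by move=> x; apply: j0.
  + by move=> x; apply: jmono => //; apply: msec.
- move=> f g mf mg f0 g0.
  rewrite -iD; [|exact: mint|exact: mint|by move=> x; apply: j0|by move=> x; apply: j0].
  congr intT; apply: funext => x; apply: jD => //; exact: msec.
- move=> c f c0 mf f0.
  rewrite -iZ; [|by []|exact: mint|by move=> x; apply: j0].
  congr intT; apply: funext => x; apply: jZ => //; exact: msec.
- move=> d' A H mH H0.
  have := imeas _ A (fun p => tint intT (fun t => H (p.1, [tuple of p.2 :: t]))).
  apply.
  + apply: (jmeas _ (A * T)%type (fun q => H (q.1.1, [tuple of q.1.2 :: q.2]))) => //.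
    apply: (measurableT_comp mH); apply: measurable_fun_pair.
    * exact: measurableT_comp.
    * apply: measurable_cons; [exact: measurableT_comp|exact: measurable_snd].
  + by move=> z; apply: j0.
Qed.

Lemma good_leb : @good _ R (fun h => \int[@lebesgue_measure R]_x h x).
Proof.
split.
- by move=> f f0; apply: integral_ge0 => x _; apply: f0.
- move=> f g mf mg f0 fg; apply: ge0_le_integral => //.
- by move=> f g mf mg f0 g0; apply: ge0_integralD => // x _.
- by move=> c f c0 mf f0; apply: ge0_integralZl_EFin => // x _.
- move=> d' A H mH H0.
  exact: (@measurable_fun_fubini_tonelli_F _ _ A (measurableTypeR R) R (@lebesgue_measure R) H mH H0).
Qed.
End good.
Local Close Scope ereal_scope.

Lemma pow_split {R : realType} (w : R) (c : R) : 0 <= c -> c `^ (1 - w) * c `^ w = c.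
Proof.
move=> c0; rewrite -powRD; first by rewrite subrK powRr1.
by rewrite subrK oner_eq0.
Qed.

Lemma amgm (R : realType) (a b w : R) : 0 <= a -> 0 <= b -> 0 <= w -> w <= 1 ->
  a `^ (1 - w) * b `^ w <= (1 - w) * a + w * b.
Proof.
move=> a0 b0 w0 w1.
have [->|wn0] := eqVneq w 0.
  by rewrite subr0 powRr0 powRr1 // mulr1 mul1r mul0r addr0.
have [->|wn1] := eqVneq w 1.
  by rewrite subrr powRr0 powRr1 // mul1r mul0r add0r.
have w1' : 1 - w != 0 by rewrite subr_eq0 eq_sym.
have rhs0 : 0 <= (1 - w) * a + w * b.
  by rewrite addr_ge0 // mulr_ge0 // subr_ge0.
have [->|an0] := eqVneq a 0.
  by rewrite powR0 // mul0r mulr0 add0r mulr_ge0.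
have [->|bn0] := eqVneq b 0.
  by rewrite (@powR0 _ w) // !mulr0 addr0 mulr_ge0 // subr_ge0.
have ap : 0 < a by rewrite lt_neqAle eq_sym an0.
have bp : 0 < b by rewrite lt_neqAle eq_sym bn0.
have := @convex_expR R (Itv01 w0 w1) (ln b) (ln a).
rewrite !convRE /= !lnK ?posrE // /unstable.onem.
rewrite /powR (negbTE an0) (negbTE bn0) -expRD.
by rewrite addrC (mulrC w (ln b)) (mulrC (1 - w)) (addrC (w * b)).
Qed.

Lemma gm_min (R : realType) (x y w : R) : 0 <= x -> 0 <= y -> 0 <= w -> w <= 1 ->
  Num.min x y <= x `^ (1 - w) * y `^ w.
Proof.
move=> x0 y0 w0 w1.
have m0 : 0 <= Num.min x y by rewrite le_min x0 y0.
rewrite -{1}(pow_split w _ m0).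
apply: ler_pM; rewrite ?powR_ge0 //.
- apply: ge0_ler_powR; rewrite ?subr_ge0 ?nnegrE // ge_min lexx //.
- apply: ge0_ler_powR; rewrite ?nnegrE // ge_min lexx orbT //.
Qed.

Local Open Scope ring_scope.
Theorem proposition3 (R : realType) (d : nat)
    (p_i p_j : nat -> R) (rho_i rho_j : forall n, conf R d n -> R) (w : R)
    (hpi : is_pmf p_i) (hpj : is_pmf p_j)
    (hri : is_loc_densities rho_i) (hrj : is_loc_densities rho_j)
    (hw0 : 0 <= w) (hw1 : w <= 1)
    (n : nat) (X : conf R d n) (hX : uniq X)
    (hfw : 0 < f_w p_i p_j rho_i rho_j w X)
    (hz : 0 < z_w rho_i rho_j w n) :
  (E_ptilde_z p_i p_j rho_i rho_j w / z_w rho_i rho_j w n <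
     Num.min (fsdens p_i rho_i X) (fsdens p_j rho_j X)
       / f_w p_i p_j rho_i rho_j w X ->
   ftilde_w p_i p_j rho_i rho_j w X <
     Num.min (fsdens p_i rho_i X) (fsdens p_j rho_j X)) /\
  Num.min (fsdens p_i rho_i X) (fsdens p_j rho_j X)
    / f_w p_i p_j rho_i rho_j w X <= 1.
Proof.
have G k : @good R _ (k.-tuple (d.-tuple R)) (@int_conf R d k).
  have H := (@good_tint R _ _ _ (@good_tint R _ _ _ (good_leb R) d) k).
  exact H.
have zb k : 0 <= z_w rho_i rho_j w k <= 1.
  case: k => [|k] /=; first by rewrite ler01 lexx.
  have [g0 gmono gD gZ _] := G k.+1.
  have [mi [i0 [i1 _]]] := hri k.+1.
  have [mj [j0 [j1 _]]] := hrj k.+1.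
  have mEi : measurable_fun setT (fun x => (rho_i k.+1 x)%:E).
    exact/measurable_EFinP.
  have mEj : measurable_fun setT (fun x => (rho_j k.+1 x)%:E).
    exact/measurable_EFinP.
  set I := int_conf _.
  have I0 : (0 <= I)%E by apply: g0 => x; rewrite lee_fin mulr_ge0 ?powR_ge0.
  have I1 : (I <= 1)%E.
    apply: (@le_trans _ _ (int_conf (fun x => (1 - w)%:E * (rho_i k.+1 x)%:E
                                      + w%:E * (rho_j k.+1 x)%:E)%E)).
      apply: gmono.
      - apply/measurable_EFinP; apply: measurable_funM.
        + exact: (measurableT_comp (measurable_powR _) mi).
        + exact: (measurableT_comp (measurable_powR _) mj).
      - by apply: emeasurable_funD; apply: measurable_funeM.
      - by move=> x; rewrite lee_fin mulr_ge0 ?powR_ge0.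
      - move=> x; rewrite -!EFinM -EFinD lee_fin; apply: amgm => //.
    rewrite gD.
    - rewrite gZ ?subr_ge0 // gZ // i1 j1 !mule1 -EFinD subrK //.
    - exact: measurable_funeM.
    - exact: measurable_funeM.
    - by move=> x; rewrite -EFinM lee_fin mulr_ge0 ?subr_ge0.
    - by move=> x; rewrite -EFinM lee_fin mulr_ge0.
  have If : I = (fine I)%:E.
    by rewrite fineK // ge0_fin_numE // (le_lt_trans I1) // ltry.
  rewrite If lee_fin in I0; rewrite If lee_fin in I1.
  by rewrite I0 I1.
set z := z_w rho_i rho_j w.
set a := fun k => p_i k `^ (1 - w) * p_j k `^ w.
have a0 k : 0 <= a k by rewrite mulr_ge0 ?powR_ge0.
have [pi0 pi1] := hpi.
have [pj0 pj1] := hpj.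
have Sa1 : (\sum_(k <oo) (a k)%:E <= 1)%E.
  apply: (@le_trans _ _ (\sum_(k <oo) ((1 - w)%:E * (p_i k)%:E + w%:E * (p_j k)%:E))%E).
    apply: lee_nneseries.
      by move=> k _ _; rewrite lee_fin.
    by move=> k _; rewrite -!EFinM -EFinD lee_fin amgm.
  rewrite nneseriesD; last 2 first.
  - by move=> k _ _; rewrite -EFinM lee_fin mulr_ge0 ?subr_ge0.
  - by move=> k _ _; rewrite -EFinM lee_fin mulr_ge0.
  rewrite !nneseriesZl; last 2 first.
  - by move=> k _; rewrite lee_fin.
  - by move=> k _; rewrite lee_fin.
  by rewrite pi1 pj1 !mule1 -EFinD subrK.
have Sa0 : (0 <= \sum_(k <oo) (a k)%:E)%E.
  by apply: nneseries_ge0 => k _ _; rewrite lee_fin.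
have Saz1 : (\sum_(k <oo) (a k * z k)%:E <= \sum_(k <oo) (a k)%:E)%E.
  apply: lee_nneseries.
    by move=> k _ _; rewrite lee_fin mulr_ge0 //; case/andP: (zb k).
  by move=> k _; rewrite lee_fin ler_piMr //; case/andP: (zb k).
have Saz0 : (0 <= \sum_(k <oo) (a k * z k)%:E)%E.
  by apply: nneseries_ge0 => k _ _; rewrite lee_fin mulr_ge0 //; case/andP: (zb k).
have fin01 (e : \bar R) : (0 <= e)%E -> (e <= 1)%E ->
    e = (fine e)%:E /\ 0 <= fine e <= 1.
  move=> e0 e1.
  have ef : e = (fine e)%:E.
    by rewrite fineK // ge0_fin_numE // (le_lt_trans e1) // ltry.
  split => //; rewrite ef lee_fin in e0; rewrite ef lee_fin in e1.
  by rewrite e0 e1.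
have [SaE /andP[Nt0 Nt1]] := fin01 _ Sa0 Sa1.
have [SazE /andP[Nw0 Nw1]] := fin01 _ Saz0 (le_trans Saz1 Sa1).
set Nt := fine (\sum_(k <oo) (a k)%:E) in SaE Nt0 Nt1.
set Nw := fine (\sum_(k <oo) (a k * z k)%:E) in SazE Nw0 Nw1.
have NtE : Ntilde_w p_i p_j w = Nt by [].
have NwE : N_w p_i p_j rho_i rho_j w = Nw by [].
have EE : E_ptilde_z p_i p_j rho_i rho_j w = Nt^-1 * Nw.
  rewrite /E_ptilde_z /ptilde_w NtE.
  rewrite (@eq_eseriesr _ _ (fun k => (Nt^-1)%:E * (a k * z k)%:E)%E).
    rewrite nneseriesZl; last by move=> k _; rewrite lee_fin mulr_ge0 //; case/andP: (zb k).
    by rewrite SazE -EFinM.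
  by move=> k _; rewrite -EFinM /a; congr EFin; rewrite /z mulrAC [RHS]mulrC.
set c : R := (n`!)%:R.
set ri := rho_i n X.
set rj := rho_j n X.
set Z := z n.
set gg := ri `^ (1 - w) * rj `^ w.
have fwE : f_w p_i p_j rho_i rho_j w X = a n * Z / Nw * c * (gg / Z) by [].
have ftE : ftilde_w p_i p_j rho_i rho_j w X = a n / Nt * c * (gg / Z) by [].
have Nwn0 : Nw != 0.
  apply/eqP => N0; move: hfw; rewrite fwE N0 invr0 mulr0 mul0r mul0r.
  by rewrite ltxx.
have Zn0 : Z != 0 by rewrite gt_eqF.
have Ntn0 : Nt != 0.
  have NwNt : Nw <= Nt by rewrite -lee_fin -SaE -SazE.
  by rewrite gt_eqF // (lt_le_trans _ NwNt) // lt_neqAle eq_sym Nwn0 Nw0.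
have fn0 : f_w p_i p_j rho_i rho_j w X != 0 by rewrite gt_eqF.
have Nwp : 0 < Nw by rewrite lt_neqAle eq_sym Nwn0 Nw0.
have [_ [ri0 _]] := hri n.
have [_ [rj0 _]] := hrj n.
have c0 : 0 <= c by rewrite ler0n.
split.
  move=> H.
  have -> : ftilde_w p_i p_j rho_i rho_j w X =
      E_ptilde_z p_i p_j rho_i rho_j w / Z * f_w p_i p_j rho_i rho_j w X.
    rewrite EE fwE ftE; field.
    by rewrite Zn0 Nwn0 Ntn0.
  rewrite -(ltr_pM2r hfw) in H.
  by rewrite (lt_le_trans H) // divfK.
rewrite ler_pdivrMr // mul1r.
apply: (le_trans (@gm_min _ _ _ w _ _ hw0 hw1)).
- by rewrite /fsdens mulr_ge0 // mulr_ge0.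
- by rewrite /fsdens mulr_ge0 // mulr_ge0.
have -> : fsdens p_i rho_i X `^ (1 - w) * fsdens p_j rho_j X `^ w = a n * c * gg.
  rewrite /fsdens !powRM ?mulr_ge0 // -(pow_split w _ c0) /a /gg /ri /rj.
  ring.
rewrite fwE.
have -> : a n * Z / Nw * c * (gg / Z) = a n * c * gg / Nw.
  by field; rewrite Nwn0 Zn0.
rewrite ler_pdivlMr // ler_piMr // mulr_ge0 // mulr_ge0 //.
  by rewrite powR_ge0.
by rewrite powR_ge0.
Qed.
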